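(* Let $\gamma>0$ and let $H$ be a $3$-graph of order $n$ with $\delta_2(H)\ge(1/2-\gamma)n$. Suppose $X,Y$ is a bipartition of $V(H)$ and $\{x,x',y,y'\}$ spans a copy of $K_4^3$ in $H$ with $x,x'\in X$ and $y,y'\in Y$. Then at least one of the following holds: (a) $\{x,x',y,y'\}$ is contained in at least $\gamma n/4$ $5$-sets that span $(X,Y)$-bridges of length $1$; (b) $(1/2-4\gamma)n\le|X|,|Y|\le(1/2+4\gamma)n$ and $xx'y$ is $(9\gamma,X,Y)$-typical.
   Context: $\delta_2(H)$ is the minimum over pairs of distinct vertices of the number of edges containing the pair. $K_4^3$ is the complete $3$-graph on $4$ vertices; $K_4^-$ is the $3$-graph with $4$ vertices and $3$ edges. A set $S$ is an $(x,y)$-connector of length $1$ if $S\cap\{x,y\}=\emptyset$, $|S|=3$, and both $S\cup\{x\}$ and $S\cup\{y\}$ span copies of $K_4^-$ in $H$. A triple $(x_0,y_0,S)$ is an $(X,Y)$-bridge of length $1$ if $x_0\in X$, $y_0\in Y$ and $S$ is an $(x_0,y_0)$-connector of length $1$; a $5$-set $Z$ spans an $(X,Y)$-bridge of length $1$ if $Z=S\cup\{x_0,y_0\}$ for some such bridge. Write $N(uv)$ for the set of vertices $w$ with $uvw\in E(H)$, $N(uv,Z)=N(uv)\cap Z$ and $\deg(uv,Z)=|N(uv,Z)|$. For $\rho>0$, a triple $xx'y$ with $x,x'\in X$, $y\in Y$ is $(\rho,X,Y)$-typical if (T1) $\deg(xx',Y)\ge|Y|-\rho n$, (T2) $|N(xy,X)\cap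 N(x'y,X)|\le\rho n$, and (T3) $|X|-\rho n\le\deg(xy,X)+\deg(x'y,X)$. *)

(* Defs.v *)
From HB Require Import structures.
From mathcomp Require Import all_boot all_order all_algebra.
Set Implicit Arguments. Unset Strict Implicit. Unset Printing Implicit Defensive.
Import Order.TTheory GRing.Theory Num.Theory.

Section Hyper.
Variable V : finType.
Implicit Types (H : {set {set V}}) (X Y Z S T : {set V}) (u v x y : V).

Definition is_3graph H : bool := [forall e in H, #|e| == 3].

Definition nbr H u v : {set V} := [set w | [set u; v; w] \in H].
Definition degZ H u v Z : nat := #|nbr H u v :&: Z|.

Definition edges_in H T : nat := #|[set e in H | e \subset T]|.

Definition spans_K4 H T : bool :=
  (#|T| == 4) && [forall e : {set V}, ((e \subset T) && (#|e| == 3)) ==> (e \in H)].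

Definition spans_K4minus H T : bool := (#|T| == 4) && (3 <= edges_in H T).

Definition connector1 H x y S : bool :=
  [&& [disjoint S & [set x; y]], #|S| == 3,
      spans_K4minus H (x |: S) & spans_K4minus H (y |: S)].

Definition spans_bridge1 H X Y Z : bool :=
  [exists x0 in X, exists y0 in Y, exists S : {set V},
     connector1 H x0 y0 S && (Z == S :|: [set x0; y0])].

End Hyper.

Local Open Scope ring_scope.
Definition typical (R : realFieldType) (V : finType) (H : {set {set V}})
    (rho : R) (X Y : {set V}) (x x' y : V) : Prop :=
  let n : R := (#|V|%N)%:R in
  [/\ (#|Y|%:R - rho * n <= (degZ H x x' Y)%:R)%R,
      ((#|nbr H x y :&: X :&: (nbr H x' y :&: X)|)%:R <= rho * n)%R &
      (#|X|%:R - rho * n <= (degZ H x y X + degZ H x' y X)%:R)%R].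

(* Main.v *)
Require Import Defs.
From HB Require Import structures.
From mathcomp Require Import all_boot all_order all_algebra.
From mathcomp Require Import ring lra.
Import Order.TTheory GRing.Theory Num.Theory.
Set Implicit Arguments. Unset Strict Implicit. Unset Printing Implicit Defensive.


Lemma pure (A B c1 c2 c3 c4 iX G : bool) :
  G || (iX && (A + c3 + c4 <= 1)%N && (A + c1 + c2 <= 1)%N)
    || (~~ iX && (c2 + c4 + B <= 1)%N && (c1 + c3 + B <= 1)%N) ->
  [/\ (2 * A + (c1 + c2 + c3 + c4) <= 2 + 2 * (~~ iX) + 4 * G)%N,
      (2 * B + (c1 + c2 + c3 + c4) <= 2 + 2 * iX + 4 * G)%N,
      ((~~ iX : nat) + (A + B + (c1 + c2 + c3 + c4)) <= (A && ~~ iX) + 3 + 4 * G)%N,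
      (((c1 && iX) && (c2 && iX) : nat) + (A + B + (c1 + c2 + c3 + c4)) <= 3 + 4 * G)%N &
      ((iX : nat) + (A + B + (c1 + c2 + c3 + c4)) <= (c1 && iX) + (c2 && iX) + 3 + 4 * G)%N].
Proof.
by case: A; case: B; case: c1; case: c2; case: c3; case: c4; case: iX; case: G.
Qed.

Lemma edges_count (V : finType) (H : {set {set V}}) (U : {set V}) (s : seq {set V}) :
  uniq s -> all (fun e : {set V} => e \subset U) s -> (count (fun e : {set V} => e \in H) s <= edges_in H U)%N.
Proof.
move=> us sU; rewrite -size_filter /edges_in.
have uf: uniq (filter (fun e : {set V} => e \in H) s) by rewrite filter_uniq.
rewrite -(card_uniqP uf); apply: subset_leq_card; apply/subsetP => e.
rewrite mem_filter inE => /andP [eH es]; rewrite eH /=; exact: (allP sU).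
Qed.

Lemma neq_wit (V : finType) (A B : {set V}) z : z \in B -> z \notin A -> A != B.
Proof. by move=> zB zA; apply/eqP => E; rewrite E zB in zA. Qed.

Lemma card3 (V : finType) (a b c : V) : a != b -> a != c -> b != c -> #|[set a; b; c]| = 3.
Proof.
move=> ab ac bc; rewrite setUC cardsU1 cards2 ab !inE.
by rewrite eq_sym (negbTE ac) eq_sym (negbTE bc).
Qed.

Lemma k4m (V : finType) (H : {set {set V}}) (p q r w : V) :
  p != q -> p != r -> q != r -> w != p -> w != q -> w != r ->
  [set p; q; r] \in H ->
  (2 <= (w \in nbr H p q) + (w \in nbr H p r) + (w \in nbr H q r))%N ->
  spans_K4minus H (w |: [set p; q; r]).
Proof.
move=> pq pr qr wp wq wr pqr two.
apply/andP; split.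
  by rewrite cardsU1 card3 // !inE (negbTE wp) (negbTE wq) (negbTE wr).
apply: (@leq_trans (count (fun e : {set V} => e \in H) [:: [set p;q;r]; [set p;q;w]; [set p;r;w]; [set q;r;w]])); last apply: edges_count.
  move: two; rewrite /nbr !inE /= pqr.
  case: ([set p; q; w] \in H); case: ([set p; r; w] \in H); case: ([set q; r; w] \in H) => //.
have f1 := negbTE pq. have f2 := negbTE pr. have f3 := negbTE qr. have f4 := negbTE wp. have f5 := negbTE wq. have f6 := negbTE wr.
have e1 : (q == p) = false by rewrite eq_sym (negbTE pq).
have e2 : (r == p) = false by rewrite eq_sym (negbTE pr).
have e3 : (r == q) = false by rewrite eq_sym (negbTE qr).
have e4 : (p == w) = false by rewrite eq_sym (negbTE wp).
have e5 : (q == w) = false by rewrite eq_sym (negbTE wq).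
have e6 : (r == w) = false by rewrite eq_sym (negbTE wr).
  rewrite /= !in_cons in_nil !orbF !negb_or.
  repeat (apply/andP; split).
all: try first [ by apply: (neq_wit (z := w)); rewrite !inE ?eqxx ?orbT ?f1 ?f2 ?f3 ?f4 ?f5 ?f6 ?e1 ?e2 ?e3 ?e4 ?e5 ?e6
        | by apply: (neq_wit (z := r)); rewrite !inE ?eqxx ?orbT ?f1 ?f2 ?f3 ?f4 ?f5 ?f6 ?e1 ?e2 ?e3 ?e4 ?e5 ?e6
        | by apply: (neq_wit (z := q)); rewrite !inE ?eqxx ?orbT ?f1 ?f2 ?f3 ?f4 ?f5 ?f6 ?e1 ?e2 ?e3 ?e4 ?e5 ?e6 ].
- done.
rewrite /=; repeat (apply/andP; split); try done; apply/subsetP => z; rewrite !inE => /orP[/orP[]|] /eqP ->;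
  by rewrite !eqxx ?orbT.
Qed.


Lemma nsym (T : eqType) (a b : T) : a != b -> b != a.
Proof. by rewrite eq_sym. Qed.

Lemma mk_bridge (V : finType) (H : {set {set V}}) (X Y : {set V}) x0 y0 (S : {set V}) :
  x0 \in X -> y0 \in Y -> x0 \notin S -> y0 \notin S -> #|S| = 3 ->
  spans_K4minus H (x0 |: S) -> spans_K4minus H (y0 |: S) ->
  spans_bridge1 H X Y (S :|: [set x0; y0]).
Proof.
move=> x0X y0Y x0S y0S cS k1 k2.
apply/existsP; exists x0; rewrite x0X /=; apply/existsP; exists y0; rewrite y0Y /=.
apply/existsP; exists S; rewrite eqxx andbT /connector1 cS k1 k2 eqxx !andbT.
rewrite disjoint_sym disjoints_subset; apply/subsetP => z.
by rewrite !inE => /orP[]/eqP->.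
Qed.

Lemma bridge4 (V : finType) (H : {set {set V}}) (X Y : {set V}) (a p q r w x0 y0 : V) :
  uniq [:: a; p; q; r; w] -> x0 \in X -> y0 \in Y ->
  ((x0 == w) && (y0 == a)) || ((x0 == a) && (y0 == w)) ->
  [set p; q; r] \in H -> a \in nbr H p q -> a \in nbr H p r -> a \in nbr H q r ->
  (2 <= (w \in nbr H p q) + (w \in nbr H p r) + (w \in nbr H q r))%N ->
  spans_bridge1 H X Y ([set p; q; r] :|: [set x0; y0]).
Proof.
move=> U x0X y0Y xy pqr a1 a2 a3 two.
move: U; rewrite /= !inE !negb_or => /andP[/and4P[ap aq ar aw]] /andP[/and3P[pq pr pw]] /andP[/andP[qr qw]] /andP[rw _].
have wS : w \notin [set p; q; r] by rewrite !inE !negb_or !(eq_sym w) pw qw rw.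
have aS : a \notin [set p; q; r] by rewrite !inE !negb_or ap aq ar.
have kw : spans_K4minus H (w |: [set p; q; r]).
  apply: k4m => //; [exact: (nsym pw) | exact: (nsym qw) | exact: (nsym rw)].
have ka : spans_K4minus H (a |: [set p; q; r]).
  apply: k4m => //; [apply: nsym => //..| by rewrite a1 a2 a3].
case/orP: xy => /andP[/eqP e1 /eqP e2]; subst x0 y0; apply: mk_bridge => //; exact: card3.
Qed.


Lemma self_l (V : finType) (H : {set {set V}}) (a b : V) : is_3graph H -> (a \in nbr H a b) = false.
Proof.
move=> H3; rewrite /nbr inE; apply/negP => e; move/forallP: H3 => /(_ [set a; b; a]).
rewrite e /= setUC cardsU1 !inE eqxx /= cards2; by case: (a != b).
Qed.

Lemma self_r (V : finType) (H : {set {set V}}) (a b : V) : is_3graph H -> (b \in nbr H a b) = false.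
Proof.
move=> H3; rewrite /nbr inE; apply/negP => e; move/forallP: H3 => /(_ [set a; b; b]).
rewrite e /= setUC cardsU1 !inE eqxx orbT /= cards2; by case: (a != b).
Qed.

Lemma tri (V : finType) (H : {set {set V}}) (T : {set V}) (a b c : V) :
  spans_K4 H T -> a \in T -> b \in T -> c \in T -> a != b -> a != c -> b != c ->
  [set a; b; c] \in H.
Proof.
move=> /andP[_ /forallP K] aT bT cT ab ac bc.
have := K [set a; b; c]; rewrite card3 // eqxx andbT => /implyP; apply.
by apply/subsetP => z; rewrite !inE => /orP[/orP[]|]/eqP->.
Qed.

Lemma key (V : finType) (H : {set {set V}}) (X Y : {set V}) (x x' y y' w : V) :
  is_3graph H -> X :&: Y = set0 -> X :|: Y = [set: V] ->
  x \in X -> x' \in X -> y \in Y -> y' \in Y -> spans_K4 H [set x; x'; y; y'] ->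
  ((w \notin [set x; x'; y; y']) && spans_bridge1 H X Y (w |: [set x; x'; y; y']))
  || ((w \in X) && ((w \in nbr H x x') + (w \in nbr H x y') + (w \in nbr H x' y') <= 1)%N
                && ((w \in nbr H x x') + (w \in nbr H x y) + (w \in nbr H x' y) <= 1)%N)
  || (~~ (w \in X) && ((w \in nbr H x' y) + (w \in nbr H x' y') + (w \in nbr H y y') <= 1)%N
                && ((w \in nbr H x y) + (w \in nbr H x y') + (w \in nbr H y y') <= 1)%N).
Proof.
move=> H3 XY0 XYT xX x'X yY y'Y K.
have notX : forall a, a \in Y -> a \notin X.
  move=> a aY; apply/negP => aX.
  have : a \in X :&: Y by rewrite inE aX aY.
  by rewrite XY0 inE.
have U4 : uniq [:: x; x'; y; y'].
  move: (K) => /andP[/eqP c4 _]; apply/card_uniqP; rewrite [size _]/= -c4; apply: eq_card => z.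
  by rewrite !inE !orbA.
case: (boolP (w \in [set x; x'; y; y'])) => wT.
  rewrite !inE in wT; move: wT => /orP[/orP[/orP[]|]|]/eqP->.
  - apply/orP; left; apply/orP; right. rewrite xX ?(self_l _ _ H3) ?(self_r _ _ H3) ?add0n ?addn0 ?leq_b1 //.
  - apply/orP; left; apply/orP; right. rewrite x'X ?(self_l _ _ H3) ?(self_r _ _ H3) ?add0n ?addn0 ?leq_b1 //.
  - apply/orP; right. rewrite (notX _ yY) ?(self_l _ _ H3) ?(self_r _ _ H3) ?add0n ?addn0 ?leq_b1 //.
  - apply/orP; right. rewrite (notX _ y'Y) ?(self_l _ _ H3) ?(self_r _ _ H3) ?add0n ?addn0 ?leq_b1 //.
have U5 : uniq [:: x; x'; y; y'; w].
  move: (U4) (wT); rewrite /= !inE !negb_or => /andP[/and3P[a1 a2 a3]] /andP[/andP[b1 b2]] /andP[c1 _] /andP[/andP[/andP[d1 d2] d3] d4].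
  by rewrite a1 a2 a3 b1 b2 c1 !(eq_sym _ w) d1 d2 d3 d4.
move: U5; rewrite /= !inE !negb_or => /andP[/and4P[ ? ? ? ?]] /andP[/and3P[? ? ?]] /andP[/andP[? ?]] /andP[? _].
have n_x_xp : (x == x') = false by apply/negbTE.
have n_xp_x : (x' == x) = false by rewrite eq_sym n_x_xp.
have n_x_y : (x == y) = false by apply/negbTE.
have n_y_x : (y == x) = false by rewrite eq_sym n_x_y.
have n_x_yp : (x == y') = false by apply/negbTE.
have n_yp_x : (y' == x) = false by rewrite eq_sym n_x_yp.
have n_x_w : (x == w) = false by apply/negbTE.
have n_w_x : (w == x) = false by rewrite eq_sym n_x_w.
have n_xp_y : (x' == y) = false by apply/negbTE.
have n_y_xp : (y == x') = false by rewrite eq_sym n_xp_y.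
have n_xp_yp : (x' == y') = false by apply/negbTE.
have n_yp_xp : (y' == x') = false by rewrite eq_sym n_xp_yp.
have n_xp_w : (x' == w) = false by apply/negbTE.
have n_w_xp : (w == x') = false by rewrite eq_sym n_xp_w.
have n_y_yp : (y == y') = false by apply/negbTE.
have n_yp_y : (y' == y) = false by rewrite eq_sym n_y_yp.
have n_y_w : (y == w) = false by apply/negbTE.
have n_w_y : (w == y) = false by rewrite eq_sym n_y_w.
have n_yp_w : (y' == w) = false by apply/negbTE.
have n_w_yp : (w == y') = false by rewrite eq_sym n_yp_w.
have tT : [/\ x \in [set x; x'; y; y'], x' \in [set x; x'; y; y'], y \in [set x; x'; y; y'] & y' \in [set x; x'; y; y']].
  by rewrite !inE !eqxx ?orbT.
case: tT => xT x'T yT y'T.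
have tr := tri K.
case: (boolP (w \in X)) => wX.
{   case: (boolP ((w \in nbr H x x') + (w \in nbr H x y') + (w \in nbr H x' y') <= 1)%N) => h1;
  case: (boolP ((w \in nbr H x x') + (w \in nbr H x y) + (w \in nbr H x' y) <= 1)%N) => h2;
  try by rewrite /nbr !inE in h1 h2; rewrite h1 h2 /= ?orbT.
  all: apply/orP; left; apply/orP; left.
  all: try solve [ (rewrite (_ : w |: [set x; x'; y; y'] = [set x; x'; y] :|: [set w; y']); last first;
      [ apply/setP => z; rewrite !inE;
        by case: (z == w); case: (z == x); case: (z == x'); case: (z == y); case: (z == y') | ];
    apply: (bridge4 (a := y') (w := w)) => //; rewrite ?eqxx /= ?orbT /nbr ?inE;
    try (apply: tr => //; apply/negbT; by rewrite ?n_x_xp ?n_xp_x ?n_x_y ?n_y_x ?n_x_yp ?n_yp_x ?n_x_w ?n_w_x ?n_xp_y ?n_y_xp ?n_xp_yp ?n_yp_xp ?n_xp_w ?n_w_xp ?n_y_yp ?n_yp_y ?n_y_w ?n_w_y ?n_yp_w ?n_w_yp);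
    try (by rewrite /= ?inE ?n_x_xp ?n_xp_x ?n_x_y ?n_y_x ?n_x_yp ?n_yp_x ?n_x_w ?n_w_x ?n_xp_y ?n_y_xp ?n_xp_yp ?n_yp_xp ?n_xp_w ?n_w_xp ?n_y_yp ?n_yp_y ?n_y_w ?n_w_y ?n_yp_w ?n_w_yp);
    try (by move: h1; rewrite -ltnNge /nbr !inE => hh; exact: hh);
    try by move: h2; rewrite -ltnNge /nbr !inE => hh; exact: hh) ].
all: try solve [ (rewrite (_ : w |: [set x; x'; y; y'] = [set x; x'; y'] :|: [set w; y]); last first;
      [ apply/setP => z; rewrite !inE;
        by case: (z == w); case: (z == x); case: (z == x'); case: (z == y); case: (z == y') | ];
    apply: (bridge4 (a := y) (w := w)) => //; rewrite ?eqxx /= ?orbT /nbr ?inE;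
    try (apply: tr => //; apply/negbT; by rewrite ?n_x_xp ?n_xp_x ?n_x_y ?n_y_x ?n_x_yp ?n_yp_x ?n_x_w ?n_w_x ?n_xp_y ?n_y_xp ?n_xp_yp ?n_yp_xp ?n_xp_w ?n_w_xp ?n_y_yp ?n_yp_y ?n_y_w ?n_w_y ?n_yp_w ?n_w_yp);
    try (by rewrite /= ?inE ?n_x_xp ?n_xp_x ?n_x_y ?n_y_x ?n_x_yp ?n_yp_x ?n_x_w ?n_w_x ?n_xp_y ?n_y_xp ?n_xp_yp ?n_yp_xp ?n_xp_w ?n_w_xp ?n_y_yp ?n_yp_y ?n_y_w ?n_w_y ?n_yp_w ?n_w_yp);
    try (by move: h1; rewrite -ltnNge /nbr !inE => hh; exact: hh);
    try by move: h2; rewrite -ltnNge /nbr !inE => hh; exact: hh) ].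

}
have wY : w \in Y.
  have : w \in X :|: Y by rewrite XYT inE.
  by rewrite inE (negbTE wX).
case: (boolP ((w \in nbr H x' y) + (w \in nbr H x' y') + (w \in nbr H y y') <= 1)%N) => h1;
case: (boolP ((w \in nbr H x y) + (w \in nbr H x y') + (w \in nbr H y y') <= 1)%N) => h2;
try by rewrite /nbr !inE in h1 h2; rewrite h1 h2 /= ?orbT.
all: apply/orP; left; apply/orP; left.
all: try solve [ (rewrite (_ : w |: [set x; x'; y; y'] = [set x; y; y'] :|: [set x'; w]); last first;
      [ apply/setP => z; rewrite !inE;
        by case: (z == w); case: (z == x); case: (z == x'); case: (z == y); case: (z == y') | ];
    apply: (bridge4 (a := x') (w := w)) => //; rewrite ?eqxx /= ?orbT /nbr ?inE;
    try (apply: tr => //; apply/negbT; by rewrite ?n_x_xp ?n_xp_x ?n_x_y ?n_y_x ?n_x_yp ?n_yp_x ?n_x_w ?n_w_x ?n_xp_y ?n_y_xp ?n_xp_yp ?n_yp_xp ?n_xp_w ?n_w_xp ?n_y_yp ?n_yp_y ?n_y_w ?n_w_y ?n_yp_w ?n_w_yp);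
    try (by rewrite /= ?inE ?n_x_xp ?n_xp_x ?n_x_y ?n_y_x ?n_x_yp ?n_yp_x ?n_x_w ?n_w_x ?n_xp_y ?n_y_xp ?n_xp_yp ?n_yp_xp ?n_xp_w ?n_w_xp ?n_y_yp ?n_yp_y ?n_y_w ?n_w_y ?n_yp_w ?n_w_yp);
    try (by move: h1; rewrite -ltnNge /nbr !inE => hh; exact: hh);
    try by move: h2; rewrite -ltnNge /nbr !inE => hh; exact: hh) ].
all: try solve [ (rewrite (_ : w |: [set x; x'; y; y'] = [set x'; y; y'] :|: [set x; w]); last first;
      [ apply/setP => z; rewrite !inE;
        by case: (z == w); case: (z == x); case: (z == x'); case: (z == y); case: (z == y') | ];
    apply: (bridge4 (a := x) (w := w)) => //; rewrite ?eqxx /= ?orbT /nbr ?inE;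
    try (apply: tr => //; apply/negbT; by rewrite ?n_x_xp ?n_xp_x ?n_x_y ?n_y_x ?n_x_yp ?n_yp_x ?n_x_w ?n_w_x ?n_xp_y ?n_y_xp ?n_xp_yp ?n_yp_xp ?n_xp_w ?n_w_xp ?n_y_yp ?n_yp_y ?n_y_w ?n_w_y ?n_yp_w ?n_w_yp);
    try (by rewrite /= ?inE ?n_x_xp ?n_xp_x ?n_x_y ?n_y_x ?n_x_yp ?n_yp_x ?n_x_w ?n_w_x ?n_xp_y ?n_y_xp ?n_xp_yp ?n_yp_xp ?n_xp_w ?n_w_xp ?n_y_yp ?n_yp_y ?n_y_w ?n_w_y ?n_yp_w ?n_w_yp);
    try (by move: h1; rewrite -ltnNge /nbr !inE => hh; exact: hh);
    try by move: h2; rewrite -ltnNge /nbr !inE => hh; exact: hh) ].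

Qed.

Lemma sum_mem (V : finType) (S : {set V}) : (\sum_(w : V) ((w \in S) : nat) = #|S|)%N.
Proof. by rewrite -sum1_card [RHS]big_mkcond /=; apply: eq_bigr => w _; case: (w \in S). Qed.

Definition ind (R : realFieldType) (V : finType) (S : {set V}) (w : V) : R := (((w \in S) : nat)%:R)%R.

Lemma sum_ind (R : realFieldType) (V : finType) (S : {set V}) : (\sum_(w : V) ind R S w = #|S|%:R)%R.
Proof. by rewrite -sum_mem natr_sum. Qed.

Lemma sum_constR (R : realFieldType) (V : finType) (c : R) : (\sum_(w : V) c = c * #|V|%:R)%R.
Proof. by rewrite sumr_const mulr_natr. Qed.

Lemma sumD (R : realFieldType) (V : finType) (f g : V -> R) :
  (\sum_(w : V) (f w + g w) = \sum_(w : V) f w + \sum_(w : V) g w)%R.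
Proof. exact: big_split. Qed.

Unset Implicit Arguments.
Local Open Scope ring_scope.

Theorem lemma5p10 (R : realFieldType) (V : finType) (gamma : R)
    (H : {set {set V}}) (X Y : {set V}) (x x' y y' : V) :
  (0 < gamma)%R ->
  is_3graph H ->
  (forall u v : V, u != v ->
     ((1 / 2 - gamma) * (#|V|)%:R <= (#|nbr H u v|)%:R)%R) ->
  X :&: Y = set0 -> X :|: Y = [set: V] ->
  x \in X -> x' \in X -> y \in Y -> y' \in Y ->
  spans_K4 H [set x; x'; y; y'] ->
  (gamma * (#|V|)%:R / 4%:R <=
     (#|[set Z : {set V} | ([set x; x'; y; y'] \subset Z) && spans_bridge1 H X Y Z]|)%:R)%R
  \/
  ([/\ ((1 / 2 - 4%:R * gamma) * (#|V|)%:R <= (#|X|)%:R)%R,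
       ((#|X|)%:R <= (1 / 2 + 4%:R * gamma) * (#|V|)%:R)%R,
       ((1 / 2 - 4%:R * gamma) * (#|V|)%:R <= (#|Y|)%:R)%R,
       ((#|Y|)%:R <= (1 / 2 + 4%:R * gamma) * (#|V|)%:R)%R &
       typical H (9%:R * gamma) X Y x x' y]).
Proof.
move=> gpos H3 codeg XY0 XYT xX x'X yY y'Y K.
set Zs := [set Z : {set V} | _].
case: (boolP (gamma * (#|V|)%:R / 4%:R <= (#|Zs|)%:R)) => hZ; [by left | right].
rewrite -ltNge in hZ.
set T := [set x; x'; y; y'].
set Gs := [set w | (w \notin T) && spans_bridge1 H X Y (w |: T)].
have gsE : forall w, (w \in Gs) = (w \notin T) && spans_bridge1 H X Y (w |: T).
  by move=> w; rewrite /Gs in_set.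
have gle : (#|Gs| <= #|Zs|)%N.
  rewrite -(@card_in_imset _ _ (fun w => w |: T) Gs).
    apply: subset_leq_card; apply/subsetP => Z /imsetP [w wG ->].
    rewrite /Zs in_set subsetUr /=; rewrite gsE in wG; by case/andP: wG.
  move=> w1 w2; rewrite !gsE => /andP[w1T _] /andP[w2T _] E.
  have : w1 \in w2 |: T by rewrite -E setU11.
  by rewrite in_setU1 (negbTE w1T) orbF => /eqP.
have U4 : uniq [:: x; x'; y; y'].
  move: (K) => /andP[/eqP c4 _]; apply/card_uniqP; rewrite [size _]/= -c4; apply: eq_card => z.
  by rewrite !inE !orbA.
move: (U4); rewrite /= !inE !negb_or => /andP[/and3P[nxx' nxy nxy']] /andP[/andP[nx'y nx'y']] /andP[nyy' _].
have hXY : forall w, (~~ (w \in X)) = (w \in Y).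
  move=> w; case wX: (w \in X) => /=.
    apply/esym/negP => wY.
    have : w \in X :&: Y by rewrite inE wX wY.
    by rewrite XY0 inE.
  have : w \in X :|: Y by rewrite XYT inE.
  by rewrite inE wX.
have cXY : (#|X| + #|Y| = #|V|)%N.
  by have := cardsUI X Y; rewrite XYT XY0 cards0 addn0 cardsT.
set NA := nbr H x x'. set NB := nbr H y y'. set N1 := nbr H x y. set N2 := nbr H x' y.
set N3 := nbr H x y'. set N4 := nbr H x' y'.
have P : forall w, _ := fun w => pure (@key V H X Y x x' y y' w H3 XY0 XYT xX x'X yY y'Y K).
have I1 : forall w, 2%:R * ind R NA w + (ind R N1 w + ind R N2 w + ind R N3 w + ind R N4 w)
    <= 2%:R + 2%:R * ind R Y w + 4%:R * ind R Gs w.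
  move=> w; rewrite /ind -!natrM -!natrD ler_nat -hXY gsE.
  by case: (P w).
have I2 : forall w, 2%:R * ind R NB w + (ind R N1 w + ind R N2 w + ind R N3 w + ind R N4 w)
    <= 2%:R + 2%:R * ind R X w + 4%:R * ind R Gs w.
  move=> w; rewrite /ind -!natrM -!natrD ler_nat gsE.
  by case: (P w).
have J1 : forall w, ind R Y w + (ind R NA w + ind R NB w + (ind R N1 w + ind R N2 w + ind R N3 w + ind R N4 w))
    <= ind R (NA :&: Y) w + 3%:R + 4%:R * ind R Gs w.
  move=> w; rewrite /ind -!natrM -!natrD ler_nat in_setI -hXY gsE.
  by case: (P w).
have J2 : forall w, ind R ((N1 :&: X) :&: (N2 :&: X)) w + (ind R NA w + ind R NB w + (ind R N1 w + ind R N2 w + ind R N3 w + ind R N4 w))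
    <= 3%:R + 4%:R * ind R Gs w.
  move=> w; rewrite /ind -!natrM -!natrD ler_nat !in_setI gsE.
  by case: (P w).
have J3 : forall w, ind R X w + (ind R NA w + ind R NB w + (ind R N1 w + ind R N2 w + ind R N3 w + ind R N4 w))
    <= ind R (N1 :&: X) w + ind R (N2 :&: X) w + 3%:R + 4%:R * ind R Gs w.
  move=> w; rewrite /ind -!natrM -!natrD ler_nat !in_setI gsE.
  by case: (P w).
have S1 := @ler_sum R V (index_enum V) (fun _ => true) _ _ (fun w _ => I1 w).
have S2 := @ler_sum R V (index_enum V) (fun _ => true) _ _ (fun w _ => I2 w).
have S3 := @ler_sum R V (index_enum V) (fun _ => true) _ _ (fun w _ => J1 w).
have S4 := @ler_sum R V (index_enum V) (fun _ => true) _ _ (fun w _ => J2 w).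
have S5 := @ler_sum R V (index_enum V) (fun _ => true) _ _ (fun w _ => J3 w).
rewrite !sumD -!mulr_sumr !sum_ind !sum_constR in S1 S2 S3 S4 S5.
have cA : (1 / 2 - gamma) * #|V|%:R <= #|NA|%:R := codeg x x' nxx'.
have cB : (1 / 2 - gamma) * #|V|%:R <= #|NB|%:R := codeg y y' nyy'.
have c1 : (1 / 2 - gamma) * #|V|%:R <= #|N1|%:R := codeg x y nxy.
have c2 : (1 / 2 - gamma) * #|V|%:R <= #|N2|%:R := codeg x' y nx'y.
have c3 : (1 / 2 - gamma) * #|V|%:R <= #|N3|%:R := codeg x y' nxy'.
have c4 : (1 / 2 - gamma) * #|V|%:R <= #|N4|%:R := codeg x' y' nx'y'.
have gleR : (#|Gs|%:R <= (#|Zs|%:R : R)) by rewrite ler_nat.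
have cXYR : (#|X|%:R + #|Y|%:R = (#|V|%:R : R)) by rewrite -natrD cXY.
have n0 : (0 : R) <= #|V|%:R by rewrite ler0n.
rewrite /typical /degZ -/NA -/N1 -/N2.
split; [lra|lra|lra|lra|split; lra].
Qed.
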